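(* Let $n\in\mathbb{N}$ and let $\sigma$ be a probability distribution on $[n]$ for which there exists $i\in[n-1]$ with $\sigma_{\le i}\le\frac in$. Let $(t_1^{(s)},\dots,t_n^{(s)})$ be the state of the exponential-jump process with choice distribution $\sigma$ after $s$ steps, started from any fixed initial state. Then $\mathbb{E}[t_n^{(s)}-t_1^{(s)}]\to\infty$ as $s\to\infty$.
   Context: $\sigma_{\le i}=\Pr_{i^*\sim\sigma}[i^*\le i]$. The exponential-jump process: the state consists of $n$ tokens at real positions $t_1<\dots<t_n$. In each step, independently sample $i^*\sim\sigma$ and $X\sim\mathrm{Exp}(1)$ (exponential with rate $1$), move the $i^*$-th token from the left a distance $X$ to the right, and re-sort the positions: $(t_1,\dots,t_n)\mapsto\mathrm{sort}(t_1,\dots,t_{i^*}+X,\dots,t_n)$. *)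

(* Defs.v *)
From HB Require Import structures.
From mathcomp Require Import all_boot all_order all_algebra.
From mathcomp Require Import all_classical all_reals all_analysis.
Set Implicit Arguments. Unset Strict Implicit. Unset Printing Implicit Defensive.
Import Order.TTheory GRing.Theory Num.Theory.
Import numFieldNormedType.Exports.
Local Open Scope classical_set_scope.
Local Open Scope ring_scope.

(* A state of the process: the (sorted) list of token positions t_1 < ... < t_n,
   stored 0-indexed: token k+1 of the paper is [nth 0 t k]. *)

(* sigma_{<= i} = Pr[i* <= i], with i* in [n] = {1..n}; 0-indexed: j < i. *)
Definition sigma_le {R : realType} (n : nat) (sigma : 'I_n -> R) (i : nat) : R :=
  \sum_(j < n | (j < i)%N) sigma j.

Definition jump {R : realType} (t : seq R) (j : nat) (x : R) : seq R :=
  sort <=%R (set_nth 0 t j (nth 0 t j + x)).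

(* Transition operator of the exponential-jump process on nonnegative
   extended-real observables:
   (P f)(t) = E[f(next state) | current state t]
            = sum_j sigma_j * int_0^oo e^{-x} f(jump t j x) dx. *)
Definition ejump_op {R : realType} (n : nat) (sigma : 'I_n -> R)
  (f : seq R -> \bar R) (t : seq R) : \bar R :=
  (\sum_(j < n) (sigma j)%:E *
     \int[@lebesgue_measure R]_(x in `[0%R, +oo[%classic)
        ((expR (- x))%:E * f (jump t j x)))%E.

Definition gap {R : realType} (n : nat) (t : seq R) : \bar R :=
  (nth 0 t n.-1 - nth 0 t 0)%:E.

Definition expected_gap {R : realType} (n : nat) (sigma : 'I_n -> R)
  (t0 : seq R) (s : nat) : \bar R :=
  iter s (ejump_op sigma) (gap n) t0.

(* Main.v *)
Require Import Defs.
From HB Require Import structures.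
From mathcomp Require Import all_boot all_order all_algebra.
From mathcomp Require Import all_classical all_reals all_analysis.
From mathcomp Require Import ring lra.
From mathcomp Require Import measurable_realfun.
Set Implicit Arguments. Unset Strict Implicit. Unset Printing Implicit Defensive.
Import Order.TTheory GRing.Theory Num.Theory.
Import numFieldNormedType.Exports.
Local Open Scope classical_set_scope.
Local Open Scope ring_scope.

Section Integrals.
Context {R : realType}.
Notation mu := (@lebesgue_measure R).

Lemma int_mono (D : set R) (f g : R -> \bar R) :
  (forall x, D x -> (0 <= f x)%E) -> (forall x, D x -> (f x <= g x)%E) ->
  (\int[mu]_(x in D) f x <= \int[mu]_(x in D) g x)%E.
Proof.
move=> f0 fg.
have g0 : forall x, D x -> (0 <= g x)%E.
  by move=> x Dx; exact: le_trans (f0 x Dx) (fg x Dx).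
rewrite (@ge0_integralE _ _ _ mu D f f0) (@ge0_integralE _ _ _ mu D g g0).
apply: ereal_sup_le => _ [h /= hf <-]; exists h => //= x.
apply: (le_trans (hf x)); rewrite /patch; case: ifP => // /set_mem Dx; exact: fg.
Qed.


Lemma is_derive_expRN (x : R) : is_derive x 1 (fun y : R => expR (- y)) (- expR (- x)).
Proof.
have d1 : derivable (-%R : R -> R) x 1.
  by apply: ex_derive.
have d2 : derivable (@expR R) (- x) 1 by apply: derivable_expR.
apply: DeriveDef.
  apply/derivable1_diffP; change (fun y : R => expR (- y)) with (@expR R \o -%R).
  by apply: differentiable_comp; apply/derivable1_diffP.
rewrite -derive1E; change (fun y : R => expR (- y)) with (@expR R \o -%R).
rewrite derive1_comp // !derive1E derive_val.
have -> : 'D_1 (-%R : R -> R) x = -1 by rewrite derive_val.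
by rewrite mulrN1.
Qed.

Lemma is_derive_lin (a b x : R) : is_derive x 1 (fun y : R => a * y + b) a.
Proof.
have -> : (fun y : R => a * y + b) = (fun y : R => a * y) + cst b.
  by apply/funext => y.
have -> : (fun y : R => a * y) = a *: id by apply/funext.
apply: is_derive_eq.
by rewrite addr0 /GRing.scale /= mulr1.
Qed.

Lemma is_derive_F (a x : R) :
  is_derive x 1 (fun y : R => - ((1 * y + (1 - a)) * expR (- y))) ((x - a) * expR (- x)).
Proof.
have -> : (fun y : R => - ((1 * y + (1 - a)) * expR (- y))) =
   - ((fun y : R => (1 * y + (1 - a))) * (fun y => expR (- y))) by apply/funext.
have h1 := is_derive_lin 1 (1 - a) x.
have h2 := is_derive_expRN x.
apply: is_derive_eq.
rewrite /GRing.scale /=. ring.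
Qed.

Lemma is_derive_le (c x : R) :
  is_derive x 1 (fun y : R => (1 * y + c) * expR (- y))
     ((1 * x + c) * - expR (- x) + expR (- x)).
Proof.
have -> : (fun y : R => (1 * y + c) * expR (- y)) =
   ((fun y : R => (1 * y + c)) * (fun y => expR (- y))) by apply/funext.
have h1 := is_derive_lin 1 c x.
have h2 := is_derive_expRN x.
apply: is_derive_eq.
by rewrite /GRing.scale /= mulr1.
Qed.

Lemma cont_le (c : R) : continuous (fun y : R => (1 * y + c) * expR (- y)).
Proof.
move=> x; apply: differentiable_continuous; apply/derivable1_diffP.
have := is_derive_le c x; by case.
Qed.

Lemma xexp_bound (x : R) : 0 <= x -> x * expR (- x) <= 2 * expR (- (2^-1 * x)).
Proof.
move=> x0.
have h : x <= 2 * expR (2^-1 * x) by have := expR_ge1Dx (2^-1 * x); lra.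
apply: le_trans (ler_wpM2r (expR_ge0 (- x)) h) _.
rewrite -mulrA -expRD; rewrite le_eqVlt; apply/orP; left; apply/eqP; congr (_ * expR _); field; lra.
Qed.

Lemma cvg_expNhalf : expR (- (2^-1 * x)) @[x --> +oo] --> (0 : R).
Proof.
have hx2 : (2^-1 * x : R) @[x --> +oo] --> +oo.
  have h2 : (0:R) < 2^-1 by rewrite invr_gt0.
  have hid : (x : R) @[x --> +oo] --> +oo by exact: cvg_id.
  exact: (gt0_cvgMry h2 hid).
have := cvg_comp _ _ hx2 (@cvgr_expR R). exact.
Qed.

Lemma cvg_xexpN : (x * expR (- x)) @[x --> +oo] --> (0 : R).
Proof.
apply: (@squeeze_cvgr _ _ _ _ (cst 0) (fun x => 2 * expR (- (2^-1 * x)))).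
- near=> x.
  have x0 : 0 <= x by near: x; apply: nbhs_pinfty_ge; exact: num_real.
  by rewrite /= mulr_ge0 ?expR_ge0 // xexp_bound.
- exact: cvg_cst.
- rewrite -(mulr0 (2:R)). exact: (cvgMl_tmp (a:=2) cvg_expNhalf).
Unshelve. all: by end_near.
Qed.


Lemma K2 (a : R) :
  (\int[mu]_(x in `[a, +oo[) ((x - a) * expR (- x))%:E = (expR (- a))%:E)%E.
Proof.
pose F := fun y : R => - ((1 * y + (1 - a)) * expR (- y)).
have dF (x : R) : is_derive x (1:R) F ((x - a) * expR (- x)) := is_derive_F a x.
rewrite (@ge0_continuous_FTC2y R (fun x => (x - a) * expR (- x)) F a 0).
- rewrite -EFinB; congr EFin; rewrite /F; ring.
- by move=> x ax; rewrite mulr_ge0 ?expR_ge0 // subr_ge0.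
- apply: continuous_subspaceT.
  have -> : (fun x : R => (x - a) * expR (- x)) = (fun y => (1 * y + - a) * expR (- y)).
    by apply/funext => y; rewrite mul1r.
  exact: cont_le.
- have -> : F = (fun y => - (y * expR (- y) + (1 - a) * expR (- y))).
    by apply/funext => y; rewrite /F; ring.
  rewrite -oppr0; apply: cvgN; rewrite -(addr0 0); apply: cvgD; first exact: cvg_xexpN.
  rewrite -(mulr0 (1 - a)); exact: (cvgMl_tmp (a:=1 - a) (@cvgr_expR R)).
- by move=> x _; case: (dF x).
- apply: cvg_at_right_filter; apply: differentiable_continuous.
  by apply/derivable1_diffP; case: (dF a).
- by move=> x _; rewrite derive1E; exact: derive_val.
Qed.


Lemma K0 : (\int[mu]_(x in `[0%R, +oo[) (expR (- x))%:E = 1%:E)%E.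
Proof.
pose F := fun y : R => - expR (- y).
have dF (x : R) : is_derive x (1:R) F (expR (- x)).
  rewrite /F -[X in is_derive _ _ _ X]opprK.
  have -> : (fun y : R => - expR (- y)) = - (fun y : R => expR (- y)) by apply/funext.
  have := is_derive_expRN x => h; apply: is_derive_eq; by [].
rewrite (@ge0_continuous_FTC2y R (fun x => expR (- x)) F 0 0).
- rewrite -EFinB; congr EFin; rewrite /F oppr0 expR0; ring.
- by move=> x _; rewrite expR_ge0.
- apply: continuous_subspaceT => x.
  by apply: differentiable_continuous; apply/derivable1_diffP; case: (is_derive_expRN x).
- rewrite -oppr0; apply: cvgN; exact: (@cvgr_expR R).
- by move=> x _; case: (dF x).
- apply: cvg_at_right_filter; apply: differentiable_continuous.
  by apply/derivable1_diffP; case: (dF 0).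
- by move=> x _; rewrite derive1E; exact: derive_val.
Qed.

Lemma mexpN (D : set R) : measurable_fun D (fun x : R => expR (- x)).
Proof.
apply: measurable_funTS; apply: open_continuous_measurable_fun; first exact: openT.
move=> x _.
by apply: differentiable_continuous; apply/derivable1_diffP; case: (is_derive_expRN x).
Qed.

Lemma mposexp (D : set R) (a : R) : measurable_fun D (fun x : R => Num.max (x - a) 0 * expR (- x)).
Proof.
apply: measurable_funM; last exact: mexpN.
apply: measurable_maxr => //.
apply: measurable_funTS; apply: open_continuous_measurable_fun; first exact: openT.
move=> x _.
apply: continuousB => //; exact: cvg_cst.
Qed.

Lemma mxexp (D : set R) : measurable_fun D (fun x : R => x * expR (- x)).
Proof. by apply: measurable_funM => //; exact: mexpN. Qed.

Lemma KP (a : R) : 0 <= a ->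
  (\int[mu]_(x in `[0%R, +oo[) (Num.max (x - a) 0 * expR (- x))%:E = (expR (- a))%:E)%E.
Proof.
move=> a0; rewrite -K2.
rewrite -[in RHS](@setIidr _ `[0%R, +oo[%classic `[a, +oo[%classic); last first.
  by move=> x /=; rewrite !in_itv /= !andbT => ax; exact: le_trans ax.
rewrite integral_mkcondr; apply: eq_integral => x _.
rewrite /patch; case: ifP => /=.
  by rewrite inE /= in_itv /= andbT => ax; rewrite max_l // subr_ge0.
move=> xa.
have xa' : x < a.
  rewrite ltNge; apply/negP => ax; move: xa.
  by rewrite (mem_set (_ : `[a, +oo[%classic x)) //= in_itv /= andbT.
by rewrite max_r ?mul0r // subr_le0 ltW.
Qed.


Let D0 := `[0%R, +oo[%classic : set R.
Let mD0 : measurable D0. Proof. exact: measurable_itv. Qed.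

Lemma i0 : mu.-integrable D0 (EFin \o (fun x : R => expR (- x))).
Proof.
apply/integrableP; split; first by apply/measurable_EFinP; exact: mexpN.
under eq_integral do rewrite /= ger0_norm ?expR_ge0//.
by rewrite K0 ltry.
Qed.

Lemma i2 (a : R) : 0 <= a -> mu.-integrable D0 (EFin \o (fun x : R => Num.max (x - a) 0 * expR (- x))).
Proof.
move=> a0; apply/integrableP; split; first by apply/measurable_EFinP; exact: mposexp.
have h x : 0 <= Num.max (x - a) 0 * expR (- x).
  by rewrite mulr_ge0 ?expR_ge0 // le_max lexx orbT.
under eq_integral do rewrite /= (ger0_norm (h _)).
by rewrite KP // ltry.
Qed.

Lemma K1 : (\int[mu]_(x in D0) (x * expR (- x))%:E = 1%:E)%E.
Proof.
rewrite -expR0 -oppr0 -(KP (lexx (0:R))); apply: eq_integral => x.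
by rewrite /D0 inE /= in_itv /= andbT => x0; rewrite subr0 max_l.
Qed.

Lemma i1 : mu.-integrable D0 (EFin \o (fun x : R => x * expR (- x))).
Proof.
have h := i2 (lexx (0:R)).
move: h; apply: eq_integrable => //.
by move=> x; rewrite /D0 inE /= in_itv /= andbT => x0; rewrite /= subr0 max_l.
Qed.

Lemma int_lin (a c0 c1 c2 : R) : 0 <= a ->
  (\int[mu]_(x in `[0%R, +oo[) ((c0 + c1 * x + c2 * Num.max (x - a) 0) * expR (- x))%:E
     = (c0 + c1 + c2 * expR (- a))%:E)%E.
Proof.
move=> a0.
transitivity (\int[mu]_(x in D0) ((c0%:E * (EFin \o (fun y : R => expR (- y)%R)) x
   + c1%:E * (EFin \o (fun y : R => (y * expR (- y))%R)) x)
   + c2%:E * (EFin \o (fun y : R => (Num.max (y - a) 0 * expR (- y))%R)) x)%E)%E.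
  by apply: eq_integral => x _; rewrite /= -!EFinM -!EFinD; congr EFin; ring.
rewrite integralD //; last 2 first.
- by apply: integrableD => //; apply: integrableZl => //; [exact: i0 | exact: i1].
- by apply: integrableZl => //; exact: i2.
rewrite integralD //; last 2 first.
- by apply: integrableZl => //; exact: i0.
- by apply: integrableZl => //; exact: i1.
rewrite (integralZl _ i0) ?(integralZl _ i1) ?(integralZl _ (i2 a0)); try exact: measurable_itv.
have e0 : (\int[mu]_(x in D0) (EFin \o (fun y : R => expR (- y))) x = 1%:E)%E by exact: K0.
have e1 : (\int[mu]_(x in D0) (EFin \o (fun y : R => (y * expR (- y))%R)) x = 1%:E)%E by exact: K1.
have e2 : (\int[mu]_(x in D0) (EFin \o (fun y : R => (Num.max (y - a) 0 * expR (- y))%R)) x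
   = (expR (- a))%:E)%E by exact: KP.
rewrite e0 e1 e2 !mule1.
by rewrite -EFinM -!EFinD.
Qed.


Lemma int_lower (G : R -> \bar R) (g : R -> R) :
  (forall x, 0 <= x -> (0 <= G x)%E /\ ((g x)%:E <= G x)%E) ->
  (\int[mu]_(x in `[0%R, +oo[) (g x)%:E <= \int[mu]_(x in `[0%R, +oo[) G x)%E.
Proof.
move=> hG.
apply: (@le_trans _ _ (\int[mu]_(x in `[0%R, +oo[) ((EFin \o g)^\+ x))%E).
  rewrite [X in (X <= _)%E]integralE.
  rewrite -[X in (_ <= X)%E]sube0; apply: leeB => //.
  by apply: integral_ge0 => x _; exact: funeneg_ge0.
apply: int_mono => x.
  by move=> _; exact: funepos_ge0.
rewrite /= in_itv /= andbT => x0; have [G0 gG] := hG x x0.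
by rewrite funeposE ge_max gG G0.
Qed.

End Integrals.

Section Comb.
Variable R : realType.
Implicit Types (u t w : seq R).

Definition Gf (i : nat) (u : seq R) (y : R) : R :=
  i%:R * y - \sum_(z <- u) Num.max (y - z) 0.
Definition Lf i u := Gf i u (nth 0 u i.-1).
Definition Sf u := \sum_(z <- u) z.
Definition Vf (n i : nat) u :=
  Sf u / (n - i)%:R - Lf i u * (n%:R / (i%:R * (n - i)%:R)).

Lemma Gf_perm i u w y : perm_eq u w -> Gf i u y = Gf i w y.
Proof. by move=> p; rewrite /Gf (perm_big _ p). Qed.

Lemma Sf_perm u w : perm_eq u w -> Sf u = Sf w.
Proof. by move=> p; rewrite /Sf (perm_big _ p). Qed.

Lemma Sf_nth u : Sf u = \sum_(0 <= k < size u) nth 0 u k.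
Proof. by rewrite /Sf (big_nth 0). Qed.

Lemma Gf_le i u y (P : pred nat) :
  Gf i u y <= \sum_(0 <= k < size u | P k) nth 0 u k
     + (i%:R - \sum_(0 <= k < size u | P k) 1) * y.
Proof.
rewrite /Gf (big_nth 0).
have h1 : \sum_(0 <= k < size u | P k) Num.max (y - nth 0 u k) 0
    <= \sum_(0 <= k < size u) Num.max (y - nth 0 u k) 0.
  rewrite [X in _ <= X](bigID P) /= lerDl.
  by apply: sumr_ge0 => k _; rewrite le_max lexx orbT.
have h2 : \sum_(0 <= k < size u | P k) (y - nth 0 u k)
    <= \sum_(0 <= k < size u | P k) Num.max (y - nth 0 u k) 0.
  by apply: ler_sum => k _; rewrite le_max lexx.
have h3 : \sum_(0 <= k < size u | P k) (y - nth 0 u k) =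
   (\sum_(0 <= k < size u | P k) 1) * y - \sum_(0 <= k < size u | P k) nth 0 u k.
  by rewrite sumrB mulr_suml; congr (_ - _); apply: eq_bigr => k _; rewrite mul1r.
lra.
Qed.

Lemma sum_lt (g : nat -> R) i n : (i <= n)%N ->
  \sum_(0 <= k < n | (k < i)%N) g k = \sum_(0 <= k < i) g k.
Proof.
move=> hin; rewrite (@big_cat_nat _ _ _ i 0 n) /= //.
have -> : \sum_(i <= k < n | (k < i)%N) g k = 0.
  rewrite big_nat_cond big1 // => k /andP[/andP[ik _] ki].
  by rewrite leqNgt ki in ik.
rewrite addr0.
rewrite big_nat_cond [RHS]big_nat_cond; apply: eq_bigl => k.
by case: (ltnP k i) => //=; rewrite andbF.
Qed.

Lemma sum_one (i : nat) : \sum_(0 <= k < i) (1 : R) = i%:R.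
Proof. by rewrite sumr_const_nat subn0. Qed.


Lemma sum_lt_neq (g : nat -> R) i n j : (i <= n)%N -> (j < i)%N ->
  \sum_(0 <= k < n | ((k < i) && (k != j))%N) g k = \sum_(0 <= k < i) g k - g j.
Proof.
move=> hin hji.
rewrite big_mkcondr /= sum_lt //.
rewrite [X in _ = X - _](bigD1_seq j) /=; last 2 first.
- by rewrite mem_index_iota.
- exact: iota_uniq.
by rewrite [in RHS]big_mkcond /= addrC addrK.
Qed.

Lemma sum_delta (g : nat -> R) (j m : nat) (c : R) :
  \sum_(0 <= k < m) (g k + (if k == j then c else 0)) =
  \sum_(0 <= k < m) g k + (if (j < m)%N then c else 0).
Proof.
rewrite big_split /=; congr (_ + _).
case: ltnP => hjm.
  rewrite (bigD1_seq j) /=; last 2 first.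
  - by rewrite mem_index_iota.
  - exact: iota_uniq.
  rewrite eqxx big1 ?addr0 // => k /negbTE ->; done.
rewrite big_nat_cond big1 // => k /andP[/andP[_ km] _].
by case: eqP => // kj; rewrite kj ltnNge hjm in km.
Qed.

Section State.
Variables (n i : nat) (hi1 : (1 <= i)%N) (hin : (i < n)%N).
Variable t : seq R.
Hypotheses (hsz : size t = n) (hsrt : sorted <=%R t).

Local Notation tk k := (nth 0 t k).

Lemma mono_t k l : (k <= l)%N -> (l < n)%N -> tk k <= tk l.
Proof.
move=> kl ln; apply: (sorted_leq_nth le_trans lexx) => //; rewrite inE hsz //.
exact: leq_ltn_trans ln.
Qed.

Let A := \sum_(0 <= k < i) tk k.
Let B := \sum_(i <= k < n) tk k.

Lemma SfAB : Sf t = A + B.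
Proof. by rewrite Sf_nth hsz (@big_cat_nat _ _ _ i) //= ltnW. Qed.

Lemma Lf_sorted : Lf i t = A.
Proof.
rewrite /Lf /Gf (big_nth 0) hsz (@big_cat_nat _ _ _ i) //=; last exact: ltnW.
set y := tk i.-1.
have e1 : \sum_(0 <= k < i) Num.max (y - tk k) 0 = \sum_(0 <= k < i) (y - tk k).
  apply: eq_big_nat => k /andP[_ ki]; rewrite max_l // subr_ge0.
  apply: mono_t; first by rewrite -ltnS prednK.
  exact: leq_ltn_trans (leq_pred i) hin.
have e2 : \sum_(i <= k < n) Num.max (y - tk k) 0 = 0.
  rewrite big_nat_cond big1 // => k /andP[/andP[ik kn] _].
  rewrite max_r // subr_le0; apply: mono_t => //.
  by rewrite (leq_trans _ ik) // leq_pred.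
rewrite e1 e2 addr0 sumrB sumr_const_nat subn0 /A -mulr_natl; ring.
Qed.

Let m := (n - i)%:R : R.
Let hm : 0 < m.
Proof. by rewrite /m ltr0n subn_gt0. Qed.
Let hir : 0 < i%:R :> R.
Proof. by rewrite ltr0n. Qed.
Let hnr : n%:R = i%:R + m :> R.
Proof. by rewrite /m -natrD subnKC // ltnW. Qed.

Lemma Vf_eq : Vf n i t = B / m - A / i%:R.
Proof.
rewrite /Vf SfAB Lf_sorted -/m hnr; field.
by rewrite !gt_eqF.
Qed.

Lemma A_ge : i%:R * tk 0 <= A.
Proof.
have -> : i%:R * tk 0 = \sum_(0 <= k < i) tk 0 by rewrite sumr_const_nat subn0 mulr_natl.
rewrite /A big_nat_cond [X in _ <= X]big_nat_cond.
apply: ler_sum => k /andP[/andP[_ ki] _]; apply: mono_t => //.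
exact: ltn_trans hin.
Qed.

Lemma B_le : B <= m * tk n.-1.
Proof.
have -> : m * tk n.-1 = \sum_(i <= k < n) tk n.-1 by rewrite sumr_const_nat mulr_natl.
rewrite /B big_nat_cond [X in _ <= X]big_nat_cond.
apply: ler_sum => k /andP[/andP[_ kn] _]; apply: mono_t.
  by rewrite -ltnS prednK // (leq_ltn_trans _ hin).
by rewrite prednK // (leq_ltn_trans _ hin).
Qed.

Lemma B_ge : m * tk i <= B.
Proof.
have -> : m * tk i = \sum_(i <= k < n) tk i by rewrite sumr_const_nat mulr_natl.
rewrite /B big_nat_cond [X in _ <= X]big_nat_cond.
by apply: ler_sum => k /andP[/andP[ik kn] _]; apply: mono_t.
Qed.

Lemma A_le j : (j < i)%N -> A <= i%:R * tk i - (tk i - tk j).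
Proof.
move=> ji.
have h : tk i - tk j <= \sum_(0 <= k < i) (tk i - tk k).
  rewrite (bigD1_seq j) /=; last 2 first.
  - by rewrite mem_index_iota.
  - exact: iota_uniq.
  rewrite lerDl big_mkcond /= big_nat_cond; apply: sumr_ge0 => k /andP[/andP[_ ki] _].
  case: ifP => // _; rewrite subr_ge0; apply: mono_t => //; exact: ltnW.
move: h; rewrite sumrB sumr_const_nat subn0 -mulr_natl -/A; lra.
Qed.

Lemma V_le_gap : Vf n i t <= tk n.-1 - tk 0.
Proof.
rewrite Vf_eq.
have h1 : B / m <= tk n.-1 by rewrite ler_pdivrMr // mulrC B_le.
have h2 : tk 0 <= A / i%:R by rewrite ler_pdivlMr // mulrC A_ge.
lra.
Qed.

Lemma V_ge j : (j < i)%N -> tk i - tk j <= i%:R * Vf n i t.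
Proof.
move=> ji; rewrite Vf_eq.
have h1 : tk i <= B / m by rewrite ler_pdivlMr // mulrC B_ge.
have h2 := A_le ji.
have -> : i%:R * (B / m - A / i%:R) = i%:R * (B / m) - A.
  by field; rewrite !gt_eqF // ltr0n // subn_gt0.
have : i%:R * tk i <= i%:R * (B / m) by rewrite ler_pM2l.
lra.
Qed.

Lemma V_ge0 : 0 <= Vf n i t.
Proof.
have := V_ge hi1.
have : tk 0 <= tk i by apply: mono_t.
move=> h1 h2.
have : 0 <= i%:R * Vf n i t :> R by lra.
by rewrite pmulr_rge0.
Qed.


Lemma jump_size j x : (j < n)%N -> size (jump t j x) = n.
Proof. by move=> jn; rewrite /jump size_sort size_set_nth hsz; apply/maxn_idPr. Qed.

Lemma jump_sorted j x : sorted <=%R (jump t j x).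
Proof. by rewrite /jump; apply: sort_sorted; exact: le_total. Qed.

Section Jump.
Variables (j : nat) (x : R) (hjn : (j < n)%N).
Let w := set_nth 0 t j (tk j + x).

Let size_w : size w = n.
Proof. by rewrite /w size_set_nth hsz; apply/maxn_idPr. Qed.

Let nth_w k : nth 0 w k = tk k + (if k == j then x else 0).
Proof. rewrite /w nth_set_nth /=; case: eqP => [->|]; by rewrite ?addr0. Qed.

Let perm_w : perm_eq (jump t j x) w.
Proof. by rewrite /jump perm_sort. Qed.

Lemma Sf_jump : Sf (jump t j x) = Sf t + x.
Proof.
rewrite (Sf_perm perm_w) Sf_nth size_w.
under eq_big_nat => k _ do rewrite nth_w.
by rewrite sum_delta hjn Sf_nth hsz.
Qed.

Lemma Lf_jump1 : Lf i (jump t j x) <= A + (if (j < i)%N then x else 0).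
Proof.
rewrite /Lf (Gf_perm _ _ perm_w).
apply: le_trans (Gf_le _ _ _ (fun k => (k < i)%N)) _.
rewrite size_w !sum_lt ?(ltnW hin) // sumr_const_nat subn0 subrr mul0r addr0.
under eq_big_nat => k _ do rewrite nth_w.
by rewrite sum_delta.
Qed.

Lemma Lf_jump2 : (j < i)%N -> Lf i (jump t j x) <= A + tk i - tk j.
Proof.
move=> ji.
rewrite /Lf (Gf_perm _ _ perm_w).
apply: le_trans (Gf_le _ _ _ (fun k => (k < i.+1) && (k != j))%N) _.
have ji1 : (j < i.+1)%N by rewrite ltnS ltnW.
rewrite size_w !sum_lt_neq // sumr_const_nat subn0.
under eq_big_nat => k _ do rewrite nth_w.
rewrite sum_delta ji1 nth_w eqxx big_nat_recr //= -/A.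
rewrite -natr1 addrK subrr mul0r addr0; lra.
Qed.

End Jump.

Lemma V_jump j x : (j < n)%N -> 0 <= x ->
  Vf n i t + (if (j < i)%N then - x / i%:R + n%:R / (i%:R * m) *
     Num.max (x - n%:R * Vf n i t) 0 else x / m)
  <= Vf n i (jump t j x).
Proof.
move=> jn x0.
set c := n%:R / (i%:R * m).
have hc : 0 < c by rewrite /c divr_gt0 // ?mulr_gt0 // ltr0n (ltn_trans hi1).
have eV u : Vf n i u = Sf u / m - Lf i u * c by [].
set v := Vf n i t.
have ev : v = Sf t / m - A * c by rewrite /v eV Lf_sorted.
have v0 : 0 <= v := V_ge0.
rewrite [X in _ <= X]eV Sf_jump //.
have hx : (Sf t + x) / m = Sf t / m + x / m by rewrite mulrDl.
case: ltnP => ji.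
- set M := Num.max (x - n%:R * v) 0.
  have hL : Lf i (jump t j x) <= A + x - M.
    rewrite /M; have [hxv|hxv] := leP (x - n%:R * v) 0.
      by have := Lf_jump1 x jn; rewrite ji; lra.
    have h1 := Lf_jump2 x jn ji.
    have h2 := V_ge ji; rewrite -/v in h2.
    have h3 : i%:R * v <= n%:R * v by rewrite ler_wpM2r // ler_nat ltnW.
    lra.
  have hL' : Lf i (jump t j x) * c <= (A + x - M) * c by rewrite ler_pM2r.
  have e1 : x / m - x * c = - x / i%:R.
    by rewrite /c hnr; field; rewrite !gt_eqF //; lra.
  have e2 : (A + x - M) * c = A * c + x * c - c * M by ring.
  lra.
- have hL : Lf i (jump t j x) <= A.
    by have := Lf_jump1 x jn; rewrite ltnNge ji /= addr0.
  have hL' : Lf i (jump t j x) * c <= A * c by rewrite ler_pM2r.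
  lra.
Qed.

End State.


Definition Tm (n : nat) (v : R) : R :=
  Num.max v 0 + expR (- (n%:R * Num.max v 0)) / n%:R.

Definition psi (n s : nat) (v : R) : R := iter s (Tm n) v.

Section TT.
Variables (n : nat) (hn : (0 < n)%N).
Let hnr : 0 < n%:R :> R.
Proof. by rewrite ltr0n. Qed.

Lemma Tm_pos v : 0 <= v -> Tm n v = v + expR (- (n%:R * v)) / n%:R.
Proof. by move=> v0; rewrite /Tm max_l. Qed.


Lemma Tm_ge v : v <= Tm n v.
Proof.
rewrite /Tm; have h1 : v <= Num.max v 0 by rewrite le_max lexx.
have h2 : 0 <= expR (- (n%:R * Num.max v 0)) / n%:R by rewrite divr_ge0 ?expR_ge0 // ltW.
lra.
Qed.

Lemma Tm_ge0 v : 0 <= Tm n v.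
Proof.
rewrite /Tm; have h1 : 0 <= Num.max v 0 by rewrite le_max lexx orbT.
have h2 : 0 <= expR (- (n%:R * Num.max v 0)) / n%:R by rewrite divr_ge0 ?expR_ge0 // ltW.
lra.
Qed.

Lemma Tm_sub a : exists2 g, 0 <= g & forall y, Tm n a + g * (y - a) <= Tm n y.
Proof.
set b := Num.max a 0.
have b0 : 0 <= b by rewrite le_max lexx orbT.
have eb : expR (- (n%:R * b)) <= 1 by rewrite expR_le1 oppr_le0 mulr_ge0 // ltW.
exists (1 - expR (- (n%:R * b))); first by rewrite subr_ge0.
move=> y; set u := Num.max y 0.
have u0 : 0 <= u by rewrite le_max lexx orbT.
have conv : expR (- (n%:R * b)) * (1 - n%:R * (u - b)) <= expR (- (n%:R * u)).
  have -> : - (n%:R * u) = - (n%:R * b) + - (n%:R * (u - b)) by ring.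
  rewrite expRD; apply: ler_wpM2l; first exact: expR_ge0.
  have := expR_ge1Dx (- (n%:R * (u - b))); lra.
have conv' : expR (- (n%:R * b)) / n%:R - expR (- (n%:R * b)) * (u - b)
    <= expR (- (n%:R * u)) / n%:R.
  have e : expR (- (n%:R * u)) / n%:R - (expR (- (n%:R * b)) / n%:R - expR (- (n%:R * b)) * (u - b))
     = (expR (- (n%:R * u)) - expR (- (n%:R * b)) * (1 - n%:R * (u - b))) / n%:R.
    by field; rewrite gt_eqF.
  have : 0 <= (expR (- (n%:R * u)) - expR (- (n%:R * b)) * (1 - n%:R * (u - b))) / n%:R.
    by rewrite divr_ge0 ?subr_ge0 // ltW.
  rewrite -e; lra.
have hg : (1 - expR (- (n%:R * b))) * (y - a) <= (1 - expR (- (n%:R * b))) * (u - b).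
  have g0 : 0 <= 1 - expR (- (n%:R * b)) by rewrite subr_ge0.
  have uy : y <= u by rewrite /u le_max lexx.
  have [a0|a0] := leP 0 a.
    have ba : b = a by rewrite /b max_l.
    rewrite ba in g0 *; apply: ler_wpM2l => //; lra.
  have -> : b = 0 by rewrite /b max_r // ltW.
  by rewrite mulr0 oppr0 expR0 subrr !mul0r.
rewrite /Tm -/b -/u.
have : (1 - expR (- (n%:R * b))) * (u - b) = u - b - expR (- (n%:R * b)) * (u - b) by ring.
lra.
Qed.

Lemma Tm_mono x y : x <= y -> Tm n x <= Tm n y.
Proof.
move=> xy; have [g g0 hg] := Tm_sub x.
by by apply: le_trans (hg y); rewrite lerDl mulr_ge0 // subr_ge0.
Qed.

Lemma psi_sub s a : exists2 g, 0 <= g & forall y, psi n s a + g * (y - a) <= psi n s y.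
Proof.
elim: s => [|s [g1 g10 h1]].
  by exists 1 => // y; rewrite /psi /= mul1r addrC subrK.
have [g2 g20 h2] := Tm_sub (psi n s a).
exists (g2 * g1); first exact: mulr_ge0.
move=> y; rewrite /psi /= -/(psi n s a) -/(psi n s y).
apply: le_trans (h2 _); rewrite -mulrA lerD2l ler_wpM2l //.
by have := h1 y; lra.
Qed.

Lemma psi_mono s x y : x <= y -> psi n s x <= psi n s y.
Proof.
move=> xy; have [g g0 hg] := psi_sub s x.
by apply: le_trans (hg y); rewrite lerDl mulr_ge0 // subr_ge0.
Qed.

Lemma psi_ge s v : v <= psi n s v.
Proof.
elim: s => // s ih; rewrite /psi /= -/(psi n s v).
exact: le_trans ih (Tm_ge _).
Qed.

Lemma psi_grow v0 : 0 <= v0 -> forall M : R, exists N : nat, forall s, (N <= s)%N -> M <= psi n s v0.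
Proof.
move=> v00 M0.
set M := Num.max M0 0.
have M0M : M0 <= M by rewrite le_max lexx.
have Mge0 : 0 <= M by rewrite le_max lexx orbT.
set c := expR (- (n%:R * M)) / n%:R.
have c0 : 0 < c by rewrite divr_gt0 // expR_gt0.
have key s : Num.min M (s%:R * c) <= psi n s v0.
  elim: s => [|s ih].
    rewrite mul0r ge_min; apply/orP; right; exact: v00.
  have ps0 : 0 <= psi n s v0 by apply: le_trans v00 (psi_ge _ _).
  rewrite /psi /= -/(psi n s v0) Tm_pos //.
  have e0 : 0 <= expR (- (n%:R * psi n s v0)) / n%:R by rewrite divr_ge0 ?expR_ge0 // ltW.
  have [hM|hM] := leP M (psi n s v0).
    by rewrite ge_min; apply/orP; left; lra.
  have hsc : s%:R * c <= psi n s v0.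
    move: ih; rewrite ge_min => /orP[|//]; lra.
  have hc : c <= expR (- (n%:R * psi n s v0)) / n%:R.
    rewrite ler_pM2r ?invr_gt0 // ler_expR lerN2 ler_pM2l //; exact: ltW.
  rewrite ge_min; apply/orP; right; rewrite -natr1 mulrDl mul1r; lra.
exists (Num.Def.archi_bound (M / c)) => s hs.
apply: le_trans M0M _; apply: le_trans (key s).
have hb := archi_boundP (divr_ge0 Mge0 (ltW c0)).
have : M < (Num.Def.archi_bound (M / c))%:R * c by rewrite -ltr_pdivrMr.
have : (Num.Def.archi_bound (M / c))%:R * c <= s%:R * c by rewrite ler_pM2r // ler_nat.
rewrite le_min lexx /=; lra.
Qed.

End TT.

End Comb.


Section Step.
Variable R : realType.
Local Open Scope ring_scope.

Lemma eqle (x y : R) : x = y -> x <= y.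
Proof. by move->. Qed.

Lemma step (n : nat) (sigma : 'I_n -> R) (sigma_ge0 : forall j, 0 <= sigma j)
  (sigma_sum1 : \sum_(j < n) sigma j = 1) (i : nat) (hi1 : (1 <= i)%N) (hin : (i < n)%N)
  (hsig : sigma_le sigma i <= i%:R / n%:R)
  (ps : R -> R) (psmono : forall x y, x <= y -> ps x <= ps y)
  (pssub : forall a, exists2 g, 0 <= g & forall y, ps a + g * (y - a) <= ps y)
  (ps0 : forall v, 0 <= v -> 0 <= ps v)
  (F : seq R -> \bar R)
  (hF : forall u, size u = n -> sorted <=%R u -> ((ps (Vf n i u))%:E <= F u)%E)
  (t : seq R) (hsz : size t = n) (hsrt : sorted <=%R t) :
  ((ps (Tm n (Vf n i t)))%:E <= ejump_op sigma F t)%E.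
Proof.
have hn : (0 < n)%N by exact: ltn_trans hin.
set v := Vf n i t.
have v0 : 0 <= v := V_ge0 hi1 hin hsz hsrt.
set m : R := (n - i)%:R.
have hm : 0 < m by rewrite /m ltr0n subn_gt0.
have hir : 0 < i%:R :> R by rewrite ltr0n.
have hnr : 0 < n%:R :> R by rewrite ltr0n.
have hnm : n%:R = i%:R + m :> R by rewrite /m -natrD subnKC // ltnW.
set c : R := n%:R / (i%:R * m).
have hc : 0 < c by rewrite /c divr_gt0 // mulr_gt0.
set a : R := n%:R * v.
have a0 : 0 <= a by rewrite mulr_ge0 // ltW.
set E := expR (- a).
set ED := fun j : nat => if (j < i)%N then - 1 / i%:R + c * E else 1 / m.
set astar := v + \sum_(j < n) sigma j * ED j.
have [be be0 hbe] := pssub astar.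
set c0 := ps astar + be * (v - astar).
set c1 := fun j : nat => if (j < i)%N then be * (- 1 / i%:R) else be / m.
set c2 := fun j : nat => if (j < i)%N then be * c else 0.
have hint (j : 'I_n) : ((c0 + c1 j + c2 j * E)%:E <=
   \int[lebesgue_measure]_(x in `[0%R, +oo[) ((expR (- x))%:E * F (jump t j x)))%E.
  rewrite /E -(int_lin c0 (c1 j) (c2 j) a0); apply: int_lower => x x0.
  have jn : (j < n)%N := ltn_ord j.
  have hsz' := jump_size hsz x jn.
  have hsrt' : sorted <=%R (jump t j x) := jump_sorted t j x.
  have hFj := hF _ hsz' hsrt'.
  have hV0 : 0 <= Vf n i (jump t j x) := V_ge0 hi1 hin hsz' hsrt'.
  split.
    apply: mule_ge0; first by rewrite lee_fin expR_ge0.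
    by apply: le_trans hFj; rewrite lee_fin ps0.
  have hVj := V_jump hi1 hin hsz hsrt jn x0.
  have h1 : c0 + c1 j * x + c2 j * Num.max (x - a) 0 <= ps (Vf n i (jump t j x)).
    apply: le_trans (psmono _ _ hVj).
    apply: le_trans (hbe _).
    rewrite /c0 /c1 /c2 -/v -/m -/c -/a; case: (j < i)%N.
      by apply: eqle; ring.
    by apply: eqle; ring.
  rewrite mulrC EFinM; apply: lee_wpmul2l; first by rewrite lee_fin expR_ge0.
  by apply: le_trans hFj; rewrite lee_fin.
rewrite /ejump_op.
apply: le_trans (_ : ((\sum_(j < n) sigma j * (c0 + c1 j + c2 j * E))%:E <= _)%E).
  rewrite lee_fin.
  have er j : c0 + c1 j + c2 j * E = c0 + be * ED j.
    by rewrite /c1 /c2 /ED; case: (j < i)%N; ring.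
  under eq_bigr do rewrite er.
  have -> : \sum_(j < n) sigma j * (c0 + be * ED j) = c0 + be * (astar - v).
    have -> : astar - v = \sum_(j < n) sigma j * ED j by rewrite /astar; lra.
    rewrite mulr_sumr -[c0 in RHS]mul1r -sigma_sum1 mulr_suml -big_split /=.
    by apply: eq_bigr => j _; ring.
  have -> : c0 + be * (astar - v) = ps astar by rewrite /c0; ring.
  apply: psmono; rewrite /astar Tm_pos // -/a -/E lerD2l.
  set sl := sigma_le sigma i.
  have esum : \sum_(j < n) sigma j * ED j = sl * (- 1 / i%:R + c * E) + (1 - sl) / m.
    rewrite (bigID (fun j : 'I_n => (j < i)%N)) /=.
    have e1 : \sum_(j < n | (j < i)%N) sigma j * ED j = sl * (- 1 / i%:R + c * E).
      rewrite /sl /sigma_le mulr_suml; apply: eq_bigr => j hj; by rewrite /ED hj.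
    have e2 : \sum_(j < n | ~~ (j < i)%N) sigma j * ED j = (1 - sl) / m.
      have -> : 1 - sl = \sum_(j < n | ~~ (j < i)%N) sigma j.
        by rewrite -sigma_sum1 (bigID (fun j : 'I_n => (j < i)%N)) /= /sl /sigma_le addrC addrK.
      rewrite mulr_suml; apply: eq_bigr => j hj; by rewrite /ED (negbTE hj) mul1r.
    by rewrite e1 e2.
  rewrite esum.
  have sl0 : 0 <= sl by rewrite /sl /sigma_le sumr_ge0.
  have E0 : 0 < E by rewrite expR_gt0.
  have E1 : E <= 1 by rewrite /E expR_le1 oppr_le0.
  set q := c * (1 - E).
  have q0 : 0 <= q by rewrite mulr_ge0 ?subr_ge0 // ltW.
  have e1 : sl * (- 1 / i%:R + c * E) + (1 - sl) / m = 1 / m - sl * q.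
    have hc' : c = 1 / i%:R + 1 / m by rewrite /c hnm; field; rewrite !gt_eqF //; lra.
    by rewrite /q hc'; ring.
  have e2 : sl * q <= i%:R / n%:R * q by rewrite ler_wpM2r.
  have e3 : i%:R / n%:R * q = 1 / m - E / m.
    by rewrite /q /c hnm; field; rewrite !gt_eqF //; lra.
  have e4 : E / n%:R <= E / m.
    rewrite ler_pdivrMr // mulrAC ler_pdivlMr // ler_pM2l // hnm lerDr; exact: ltW.
  lra.
rewrite -sumEFin; apply: lee_sum => j _; rewrite EFinM; apply: lee_wpmul2l.
  by rewrite lee_fin.
exact: hint.
Qed.

End Step.

Unset Implicit Arguments.

Theorem lemma12 (R : realType) (n : nat) (sigma : 'I_n -> R)
  (sigma_ge0 : forall j, 0 <= sigma j)
  (sigma_sum1 : \sum_(j < n) sigma j = 1)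
  (hsig : exists i : nat, [/\ (1 <= i)%N, (i <= n.-1)%N &
                            sigma_le sigma i <= i%:R / n%:R])
  (t0 : seq R) (ht0size : size t0 = n) (ht0sorted : sorted <%R t0) :
  expected_gap sigma t0 s @[s --> \oo] --> +oo%E.
Proof.
have [i [hi1 hin' hsl]] := hsig.
have hn : (0 < n)%N.
  case: (posnP n) => // n0.
  by move: hin'; rewrite n0 /= leqn0 => /eqP i0; rewrite i0 in hi1.
have hin : (i < n)%N by rewrite (leq_ltn_trans hin') // prednK.
have hsrt0 : sorted <=%R t0.
  by apply: sub_sorted ht0sorted => x y /ltW.
have key : forall s u, size u = n -> sorted <=%R u ->
    ((psi n s (Vf n i u))%:E <= iter s (ejump_op sigma) (gap n) u)%E.
  elim=> [|s ih] u hsz hsrt.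
    by rewrite /= /gap lee_fin /psi /=; exact: V_le_gap.
  rewrite [iter _ _ _]/= /psi iterSr -/(psi n s _).
  apply: step => //.
  - by move=> x y; apply: psi_mono.
  - by move=> a; apply: psi_sub.
  - by move=> v v0; exact: le_trans v0 (psi_ge _ _ _).
apply/cvgeyPge => M.
have [N hN] := psi_grow hn (V_ge0 hi1 hin ht0size hsrt0) M.
near=> s.
apply: le_trans (key s t0 ht0size hsrt0); rewrite lee_fin; apply: hN.
by near: s; exists N.
Unshelve. all: by end_near.
Qed.
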